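(* Let $X,Y \in \mathcal{B(H)}$ and $q \in \mathcal{D'}$. Then \begin{itemize} \item[(a)] $\max\{w_q(X-Y),w_q(X+Y)\} \le w_q\left(\begin{bmatrix} X & Y\\ Y & X \end{bmatrix}\right) \le \max\{ \|X-Y\|, \|X+Y\|\}$, \item[(b)] $\frac{1}{2}\max\{w_q(X+Y),w_q(X-Y)\} \le w_q \left(\begin{bmatrix} 0 & X\\ Y & 0 \end{bmatrix}\right) \le \frac{1}{2}(\|X+Y\|+\|X-Y\|)$. \end{itemize}
   Context: $\mathcal{H}$ is a complex Hilbert space, $\mathcal{B(H)}$ the algebra of bounded linear operators on $\mathcal{H}$ with the operator norm, and $2\times 2$ operator matrices act on $\mathcal{H}\oplus\mathcal{H}$. $\mathcal{D}$ is the closed unit disc in $\mathbb{C}$ and $\mathcal{D'}=\mathcal{D}\setminus\{0\}$. For $|q|\le 1$, $W_q(T)=\{\langle Tx,y\rangle : \|x\|=\|y\|=1,\ \langle x,y\rangle=q\}$ and $w_q(T)=\sup_{w\in W_q(T)}|w|$. *)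

(* Defs.v *)
From HB Require Import structures.
From mathcomp Require Import all_boot all_order all_algebra.
From mathcomp Require Import complex.
From mathcomp Require Import boolp classical_sets reals.
Set Implicit Arguments.
Unset Strict Implicit.
Unset Printing Implicit Defensive.
Import Order.TTheory GRing.Theory Num.Theory.
Local Open Scope ring_scope.
Local Open Scope classical_set_scope.

Section Hilbert.
Variable R : realType.
Local Notation C := (R[i]).

Definition ipnorm (V : Type) (ip : V -> V -> C) (x : V) : R :=
  Num.sqrt (complex.Re (ip x x)).

Record is_hilbert (H : lmodType C) (ip : H -> H -> C) : Prop := {
  ip_linear_l : forall (a : C) (x y z : H), ip (a *: x + y) z = a * ip x z + ip y z;
  ip_conj_sym : forall x y : H, ip x y = conjc (ip y x);
  ip_ge0 : forall x : H, 0 <= ip x x;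
  ip_definite : forall x : H, ip x x = 0 -> x = 0;
  ip_complete : forall u : nat -> H,
    (forall e : R, 0 < e -> exists N : nat, forall m n : nat,
        (N <= m)%N -> (N <= n)%N -> ipnorm ip (u m - u n) < e) ->
    exists l : H, forall e : R, 0 < e -> exists N : nat, forall n : nat,
        (N <= n)%N -> ipnorm ip (u n - l) < e
}.

Definition bounded_linear (H : lmodType C) (ip : H -> H -> C) (T : H -> H) : Prop :=
  (forall (a : C) (x y : H), T (a *: x + y) = a *: T x + T y) /\
  (exists M : R, forall x : H, ipnorm ip (T x) <= M * ipnorm ip x).

Definition opnorm (V : Type) (ip : V -> V -> C) (T : V -> V) : R :=
  sup [set ipnorm ip (T x) | x in [set x | ipnorm ip x <= 1]].

Definition Wq (V : Type) (ip : V -> V -> C) (q : C) (T : V -> V) : set C :=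
  [set w | exists x y : V, [/\ ipnorm ip x = 1, ipnorm ip y = 1,
                              ip x y = q & w = ip (T x) y]].

Definition wq (V : Type) (ip : V -> V -> C) (q : C) (T : V -> V) : R :=
  sup [set Normc.normc w | w in Wq ip q T].

Definition ip2 (H : lmodType C) (ip : H -> H -> C) (u v : H * H) : C :=
  ip u.1 v.1 + ip u.2 v.2.

(* the 2x2 operator matrix [[A, B]; [D, E]] acting on H (+) H *)
Definition opmx2 (H : lmodType C) (A B D E : H -> H) (u : H * H) : H * H :=
  (A u.1 + B u.2, D u.1 + E u.2).

End Hilbert.

(* Main.v *)
Require Import Defs.
From HB Require Import structures.
From mathcomp Require Import all_boot all_order all_algebra.
From mathcomp Require Import complex.
From mathcomp Require Import boolp classical_sets reals.
From mathcomp Require Import ring lra.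
Import Order.TTheory GRing.Theory Num.Theory.
Set Implicit Arguments.
Unset Strict Implicit.
Local Open Scope ring_scope.
Local Open Scope complex_scope.

Section IP.
Variable R : realType.
Variable V : lmodType R[i].
Variable ip : V -> V -> R[i].
Hypothesis lin : forall (a : R[i]) (x y z : V), ip (a *: x + y) z = a * ip x z + ip y z.
Hypothesis csym : forall x y : V, ip x y = conjc (ip y x).
Hypothesis ge0 : forall x : V, 0 <= ip x x.
Hypothesis def : forall x : V, ip x x = 0 -> x = 0.

Lemma ipDl x y z : ip (x + y) z = ip x z + ip y z.
Proof. by have := lin 1 x y z; rewrite scale1r mul1r. Qed.
Lemma ip0l z : ip 0 z = 0.
Proof. have h := ipDl 0 0 z; rewrite addr0 in h.
by apply: (addrI (ip 0 z)); rewrite addr0 -h. Qed.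
Lemma ipZl a x z : ip (a *: x) z = a * ip x z.
Proof. by have := lin a x 0 z; rewrite addr0 ip0l addr0. Qed.
Lemma ipNl x z : ip (- x) z = - ip x z.
Proof. by rewrite -scaleN1r ipZl mulN1r. Qed.
Lemma ipDr x y z : ip z (x + y) = ip z x + ip z y.
Proof. by rewrite (csym z (x+y)) (csym z x) (csym z y) ipDl rmorphD. Qed.
Lemma ipZr a x z : ip z (a *: x) = conjc a * ip z x.
Proof. by rewrite (csym z (a *: x)) (csym z x) ipZl rmorphM. Qed.
Lemma ipNr x z : ip z (- x) = - ip z x.
Proof. by rewrite (csym z (-x)) (csym z x) ipNl rmorphN. Qed.
Lemma ip0r z : ip z 0 = 0.
Proof. by rewrite (csym z 0) ip0l rmorph0. Qed.

Definition N x := complex.Re (ip x x).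
Lemma ipxx x : ip x x = (N x)%:C.
Proof.
have := ge0 x; rewrite lecE => /andP[/eqP hI _]; rewrite /N.
by move: hI; case: (ip x x) => a b /= ->.
Qed.
Lemma N_ge0 x : 0 <= N x.
Proof. by have := ge0 x; rewrite ipxx lecR. Qed.
Lemma N_eq0 x : N x = 0 -> x = 0.
Proof. by move=> h; apply: def; rewrite ipxx h. Qed.

Lemma normc_ge0 (z : R[i]) : 0 <= Normc.normc z.
Proof. by case: z => a b /=; rewrite sqrtr_ge0. Qed.

Lemma normcC (z : R[i]) : ((Normc.normc z) ^+ 2)%:C = z * conjc z.
Proof.
rewrite -sqr_normc normc_def rmorphXn /=; congr (_ ^+ 2).
by case: z.
Qed.

Lemma CS x y : Normc.normc (ip x y) ^+ 2 <= N x * N y.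
Proof.
have [->|y0] := eqVneq y 0.
  by rewrite ip0r Normc.normc0 expr0n /= mulr_ge0 ?N_ge0.
have Ny0 : 0 < N y.
  rewrite lt_def N_ge0 andbT; apply/eqP => /N_eq0 h; by rewrite h eqxx in y0.
set b := ip x y.
set t := b / (N y)%:C.
have hNy : (N y)%:C != 0 :> R[i].
  by apply/eqP => h; have h2 := complexI h; rewrite h2 ltxx in Ny0.
have Ct : conjc t = conjc b / (N y)%:C.
  by rewrite /t rmorphM fmorphV; congr (_ * _^-1); exact: conjc_real.
have Er : ((N x - Normc.normc b ^+ 2 / N y)%:C : R[i]) = (N x)%:C - b * conjc b / (N y)%:C.
  by rewrite rmorphB rmorphM fmorphV; congr (_ - _ * _); exact: normcC.
have E : ip (x - t *: y) (x - t *: y)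
     = (N x - Normc.normc b ^+ 2 / N y)%:C.
  rewrite Er !ipDl !ipDr !ipNl !ipNr !ipZl !ipZr.
  rewrite [ip y x]csym -/b !ipxx Ct /t.
  field; exact: hNy.
have := N_ge0 (x - t *: y); rewrite /N E /= subr_ge0 ler_pdivrMr //.
Qed.
End IP.

Arguments N {R V} ip x.

Local Open Scope classical_set_scope.
Section SUP.
Variable R : realType.
Lemma sup_scale_le (A B : set R) (c : R) : 0 <= c ->
  (forall b, B b -> 0 <= b) -> (exists M, forall b, B b -> b <= M) ->
  (forall a, A a -> exists2 b, B b & c * a <= b) -> c * sup A <= sup B.
Proof.
move=> c0 B0 [M hM] hAB.
have supB0 : 0 <= sup B.
  case: (pselect (B !=set0)) => [[b Bb]|nB].
    apply: le_trans (B0 _ Bb) _; apply: sup_upper_bound => //.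
    by split; [exists b | exists M => z Bz; exact: hM].
  by rewrite sup_out // => -[].
case: (pselect (A !=set0)) => [[a Aa]|nA]; last by rewrite sup_out ?mulr0 // => -[].
have [b Bb _] := hAB a Aa.
have hB : has_sup B by split; [exists b | exists M => z Bz; exact: hM].
have [->|cpos] := eqVneq c 0; first by rewrite mul0r.
have c0' : 0 < c by rewrite lt_def cpos c0.
rewrite -ler_pdivlMl //; apply: ge_sup; first by exists a.
move=> z Az; rewrite ler_pdivlMl //.
have [b' Bb' hb'] := hAB z Az; apply: le_trans hb' _.
exact: sup_upper_bound.
Qed.

Lemma sup_le_ub (A : set R) (m : R) : 0 <= m -> (forall a, A a -> a <= m) -> sup A <= m.
Proof.
move=> m0 hA; case: (pselect (A !=set0)) => [nA|nA]; first exact: ge_sup.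
by rewrite sup_out // => -[].
Qed.
End SUP.

Section OP.
Variable R : realType.
Variable V : lmodType R[i].
Variable ip : V -> V -> R[i].
Hypothesis lin : forall (a : R[i]) (x y z : V), ip (a *: x + y) z = a * ip x z + ip y z.
Hypothesis csym : forall x y : V, ip x y = conjc (ip y x).
Hypothesis ge0 : forall x : V, 0 <= ip x x.
Hypothesis def : forall x : V, ip x x = 0 -> x = 0.

Lemma N_scale (k : R) z : N ip (k%:C *: z) = k ^+ 2 * N ip z.
Proof.
rewrite /N (ipZl lin) (ipZr lin csym) conjc_real (ipxx ge0) /=.
by ring.
Qed.

Lemma N_scaleC (a : R[i]) z : N ip (a *: z) = Normc.normc a ^+ 2 * N ip z.
Proof.
rewrite /N (ipZl lin) (ipZr lin csym) mulrA -normcC (ipxx ge0) /=.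
by ring.
Qed.

Lemma lin0 (S : V -> V) : (forall a x y, S (a *: x + y) = a *: S x + S y) -> S 0 = 0.
Proof.
move=> Sl; have := Sl 1 0 0; rewrite !scale1r !addr0 => h.
by apply: (addrI (S 0)); rewrite addr0 -h.
Qed.

Lemma N0 : N ip 0 = 0.
Proof. by rewrite /N (ip0l lin). Qed.

Lemma opnorm_bound (S : V -> V) (Sl : forall a x y, S (a *: x + y) = a *: S x + S y)
  (K : R) (hK : forall x, N ip (S x) <= K * N ip x) :
  0 <= opnorm ip S /\ forall x, N ip (S x) <= opnorm ip S ^+ 2 * N ip x.
Proof.
set E := [set ipnorm ip (S x) | x in [set x | ipnorm ip x <= 1]].
have S0 := lin0 Sl.
have E0 : E 0.
  exists 0; last by rewrite /ipnorm S0 -/(N ip 0) N0 sqrtr0.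
  by rewrite /= /ipnorm -/(N ip 0) N0 sqrtr0.
have hE : has_sup E.
  split; first by exists 0.
  exists (Num.sqrt `|K|) => _ [x /= hx <-].
  rewrite /ipnorm -/(N ip (S x)); apply: ler_wsqrtr.
  have Nx1 : N ip x <= 1.
    move: hx; rewrite /ipnorm -/(N ip x) => hx.
    have := N_ge0 ge0 x => h0.
    rewrite -(sqr_sqrtr h0); have := sqrtr_ge0 (N ip x); nra.
  apply: le_trans (hK x) _.
  have := N_ge0 ge0 x; have := ler_norm K; have := normr_ge0 K; nra.
have o0 : 0 <= opnorm ip S by exact: (sup_upper_bound hE).
split => // x.
have [x0|xn0] := eqVneq (N ip x) 0.
  by rewrite (N_eq0 ge0 def x0) S0 N0 mulr0.
have Nx0 : 0 < N ip x by rewrite lt_def xn0 N_ge0.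
set r := Num.sqrt (N ip x).
have r0 : 0 < r by rewrite sqrtr_gt0.
have r2 : r ^+ 2 = N ip x by rewrite sqr_sqrtr // ltW.
have hx' : N ip ((r^-1)%:C *: x) = 1.
  by rewrite N_scale -r2 exprVn mulVf // expf_neq0 // gt_eqF.
have hS : S ((r^-1)%:C *: x) = (r^-1)%:C *: S x.
  by have := Sl (r^-1)%:C x 0; rewrite addr0 S0 addr0.
have : E (Num.sqrt (N ip (S ((r^-1)%:C *: x)))).
  by exists ((r^-1)%:C *: x) => //=; rewrite /ipnorm -/(N ip _) hx' sqrtr1.
move/(sup_upper_bound hE); rewrite -/(opnorm ip S) hS N_scale => h.
have h2 : r^-1 ^+ 2 * N ip (S x) <= opnorm ip S ^+ 2.
  have h0 : 0 <= r^-1 ^+ 2 * N ip (S x) by rewrite mulr_ge0 ?N_ge0 ?exprn_ge0 ?invr_ge0 ?ltW.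
  rewrite -(sqr_sqrtr h0); have := sqrtr_ge0 (r^-1 ^+ 2 * N ip (S x)); nra.
rewrite -r2; move: h2; rewrite exprVn ler_pdivrMl ?exprn_gt0 //.
by rewrite mulrC.
Qed.
End OP.

Section IP2.
Variable R : realType.
Variable V : lmodType R[i].
Variable ip : V -> V -> R[i].
Hypothesis lin : forall (a : R[i]) (x y z : V), ip (a *: x + y) z = a * ip x z + ip y z.
Hypothesis csym : forall x y : V, ip x y = conjc (ip y x).
Hypothesis ge0 : forall x : V, 0 <= ip x x.
Hypothesis def : forall x : V, ip x x = 0 -> x = 0.

Lemma NN x : N ip (- x) = N ip x.
Proof. by rewrite /N (ipNl lin) (ipNr lin csym) opprK. Qed.

Lemma Re_le_normc (z : R[i]) : complex.Re z <= Normc.normc z.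
Proof.
case: z => a b /=; apply: le_trans (ler_norm a) _.
rewrite -sqrtr_sqr; apply: ler_wsqrtr; rewrite lerDl; exact: sqr_ge0.
Qed.

Lemma tri a b (s d t : R) : 0 <= s -> 0 <= d -> 0 <= t ->
  N ip a <= s ^+ 2 * t -> N ip b <= d ^+ 2 * t -> N ip (a + b) <= (s + d) ^+ 2 * t.
Proof.
move=> s0 d0 t0 ha hb.
have E : ip (a + b) (a + b) = ip a a + ip b b + (ip a b + conjc (ip a b)).
  by rewrite (ipDl lin) !(ipDr lin csym) [ip b a]csym; ring.
have ER : N ip (a + b) = N ip a + N ip b + 2 * complex.Re (ip a b).
  have := congr1 (@complex.Re R) E; rewrite /N => ->.
  by case: (ip a b) => p q; rewrite (ipxx ge0 a) (ipxx ge0 b) /=; ring.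
have hcs := CS lin csym ge0 def a b.
have hn := normc_ge0 (ip a b).
have hre := Re_le_normc (ip a b).
have hNa := N_ge0 ge0 a; have hNb := N_ge0 ge0 b.
have h1 : Normc.normc (ip a b) ^+ 2 <= (s * d * t) ^+ 2.
  apply: le_trans hcs _.
  have -> : (s * d * t) ^+ 2 = (s ^+ 2 * t) * (d ^+ 2 * t) by ring.
  by apply: ler_pM.
have h2 : Normc.normc (ip a b) <= s * d * t.
  have : 0 <= s * d * t by rewrite !mulr_ge0.
  nra.
rewrite ER; nra.
Qed.

Lemma N_unit x : ipnorm ip x = 1 -> N ip x = 1.
Proof.
rewrite /ipnorm -/(N ip x) => h.
by rewrite -(sqr_sqrtr (N_ge0 ge0 x)) h expr1n.
Qed.
End IP2.

Lemma wq_le (R : realType) (V : lmodType R[i]) (ip : V -> V -> R[i])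
  (lin : forall (a : R[i]) (x y z : V), ip (a *: x + y) z = a * ip x z + ip y z)
  (csym : forall x y : V, ip x y = conjc (ip y x))
  (ge0 : forall x : V, 0 <= ip x x)
  (def : forall x : V, ip x x = 0 -> x = 0) q (T : V -> V) (m : R) :
  0 <= m -> (forall u, N ip u = 1 -> N ip (T u) <= m ^+ 2) -> wq ip q T <= m.
Proof.
move=> m0 hT; apply: sup_le_ub => // _ [w [u [v [hu hv _ ->]]] <-].
have := CS lin csym ge0 def (T u) v; rewrite (N_unit ge0 hv) mulr1 => h.
have := hT u (N_unit ge0 hu); have := normc_ge0 (ip (T u) v); nra.
Qed.

Lemma wq_ge (R : realType) (V1 V : lmodType R[i]) (ip1 : V1 -> V1 -> R[i]) (ip : V -> V -> R[i])
  (lin : forall (a : R[i]) (x y z : V), ip (a *: x + y) z = a * ip x z + ip y z)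
  (csym : forall x y : V, ip x y = conjc (ip y x))
  (ge0 : forall x : V, 0 <= ip x x)
  (def : forall x : V, ip x x = 0 -> x = 0)
  (ge01 : forall x : V1, 0 <= ip1 x x)
  q (T1 : V1 -> V1) (T : V -> V) (c m : R) :
  0 <= c -> 0 <= m -> (forall u, N ip u = 1 -> N ip (T u) <= m ^+ 2) ->
  (forall x y, N ip1 x = 1 -> N ip1 y = 1 -> ip1 x y = q ->
     exists u v, [/\ N ip u = 1, N ip v = 1, ip u v = q &
                   c * Normc.normc (ip1 (T1 x) y) <= Normc.normc (ip (T u) v)]) ->
  c * wq ip1 q T1 <= wq ip q T.
Proof.
move=> c0 m0 hT hc; apply: sup_scale_le => //.
- by move=> _ [w _ <-]; exact: normc_ge0.
- exists m => _ [w [u [v [hu hv _ ->]]] <-].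
  have := CS lin csym ge0 def (T u) v; rewrite (N_unit ge0 hv) mulr1 => h.
  have := hT u (N_unit ge0 hu); have := normc_ge0 (ip (T u) v); nra.
- move=> _ [w [x [y [hx hy hxy ->]]] <-].
  have [u [v [hu hv huv hle]]] := hc x y (N_unit ge01 hx) (N_unit ge01 hy) hxy.
  exists (Normc.normc (ip (T u) v)) => //.
  exists (ip (T u) v) => //; exists u, v; split => //.
  + by rewrite /ipnorm -/(N ip u) hu sqrtr1.
  + by rewrite /ipnorm -/(N ip v) hv sqrtr1.
Qed.

Theorem proposition3p1 (R : realType) (H : lmodType (R[i])) (ip : H -> H -> R[i])
  (hH : is_hilbert ip) (X Y : H -> H)
  (hX : bounded_linear ip X) (hY : bounded_linear ip Y)
  (q : R[i]) (hq0 : q != 0) (hq1 : Normc.normc q <= 1) :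
  (Num.max (wq ip q (fun x => X x - Y x)) (wq ip q (fun x => X x + Y x))
     <= wq (ip2 ip) q (opmx2 X Y Y X)
   /\ wq (ip2 ip) q (opmx2 X Y Y X)
     <= Num.max (opnorm ip (fun x => X x - Y x)) (opnorm ip (fun x => X x + Y x)))
  /\
  (2^-1 * Num.max (wq ip q (fun x => X x + Y x)) (wq ip q (fun x => X x - Y x))
     <= wq (ip2 ip) q (opmx2 (fun _ => 0) X Y (fun _ => 0))
   /\ wq (ip2 ip) q (opmx2 (fun _ => 0) X Y (fun _ => 0))
     <= 2^-1 * (opnorm ip (fun x => X x + Y x) + opnorm ip (fun x => X x - Y x))).
Proof.
have lin := ip_linear_l hH; have csym := ip_conj_sym hH.
have ge0 := ip_ge0 hH; have def := ip_definite hH.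
have lin2 : forall (a : R[i]) (u w z : H * H),
    ip2 ip (a *: u + w) z = a * ip2 ip u z + ip2 ip w z.
  by move=> a [u1 u2] [w1 w2] [z1 z2]; rewrite /ip2 /= !lin; ring.
have csym2 : forall u w : H * H, ip2 ip u w = conjc (ip2 ip w u).
  by move=> [u1 u2] [w1 w2]; rewrite /ip2 /= (csym u1 w1) (csym u2 w2) rmorphD.
have ge02 : forall u : H * H, 0 <= ip2 ip u u.
  by move=> [u1 u2]; rewrite /ip2 /= addr_ge0.
have def2 : forall u : H * H, ip2 ip u u = 0 -> u = 0.
  move=> [u1 u2]; rewrite /ip2 /= => /eqP; rewrite paddr_eq0 ?ge0 //.
  by move=> /andP[/eqP h1 /eqP h2]; rewrite (def _ h1) (def _ h2).
have N2E : forall w : H * H, N (ip2 ip) w = N ip w.1 + N ip w.2.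
  by move=> [w1 w2]; rewrite {1}/N /ip2 /= (ipxx ge0 w1) (ipxx ge0 w2).
have [Xl [MX hMX]] := hX; have [Yl [MY hMY]] := hY.
have X0 := lin0 Xl; have Y0 := lin0 Yl.
have XD : forall x y, X (x + y) = X x + X y.
  by move=> x y; have := Xl 1 x y; rewrite !scale1r.
have YD : forall x y, Y (x + y) = Y x + Y y.
  by move=> x y; have := Yl 1 x y; rewrite !scale1r.
have XZ : forall a x, X (a *: x) = a *: X x.
  by move=> a x; have := Xl a x 0; rewrite !addr0 X0 addr0.
have YZ : forall a x, Y (a *: x) = a *: Y x.
  by move=> a x; have := Yl a x 0; rewrite !addr0 Y0 addr0.
have XN : forall x, X (- x) = - X x by move=> x; rewrite -scaleN1r XZ scaleN1r.
have YN : forall x, Y (- x) = - Y x by move=> x; rewrite -scaleN1r YZ scaleN1r.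
have KX : forall x, N ip (X x) <= `|MX| ^+ 2 * N ip x.
  move=> x; rewrite real_normK ?num_real //.
  have := hMX x; rewrite /ipnorm -/(N ip x) -/(N ip (X x)) => h.
  have h1 := sqr_sqrtr (N_ge0 ge0 x); have h2 := sqr_sqrtr (N_ge0 ge0 (X x)).
  have h3 := sqrtr_ge0 (N ip x); have h4 := sqrtr_ge0 (N ip (X x)).
  rewrite -h1 -h2; nra.
have KY : forall x, N ip (Y x) <= `|MY| ^+ 2 * N ip x.
  move=> x; rewrite real_normK ?num_real //.
  have := hMY x; rewrite /ipnorm -/(N ip x) -/(N ip (Y x)) => h.
  have h1 := sqr_sqrtr (N_ge0 ge0 x); have h2 := sqr_sqrtr (N_ge0 ge0 (Y x)).
  have h3 := sqrtr_ge0 (N ip x); have h4 := sqrtr_ge0 (N ip (Y x)).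
  rewrite -h1 -h2; nra.
have SL : forall a x y, X (a *: x + y) + Y (a *: x + y) = a *: (X x + Y x) + (X y + Y y).
  by move=> a x y; rewrite Xl Yl scalerDr addrACA.
have DL : forall a x y, X (a *: x + y) - Y (a *: x + y) = a *: (X x - Y x) + (X y - Y y).
  by move=> a x y; rewrite Xl Yl scalerBr opprD addrACA.
have KS : forall x, N ip (X x + Y x) <= (`|MX| + `|MY|) ^+ 2 * N ip x.
  by move=> x; apply: (tri lin csym ge0 def) => //; rewrite ?N_ge0.
have KD : forall x, N ip (X x - Y x) <= (`|MX| + `|MY|) ^+ 2 * N ip x.
  move=> x; apply: (tri lin csym ge0 def) => //; rewrite ?N_ge0 ?(NN lin csym) //.
have [oS0 hoS] := opnorm_bound lin csym ge0 def SL KS.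
have [oD0 hoD] := opnorm_bound lin csym ge0 def DL KD.
set oS := opnorm ip (fun x => X x + Y x) in oS0 hoS *.
set oD := opnorm ip (fun x => X x - Y x) in oD0 hoD *.
rewrite /= in hoS hoD.
set mA := Num.max oD oS.
have mA0 : 0 <= mA by rewrite le_max oD0.
have oSm : oS <= mA by rewrite le_max lexx orbT.
have oDm : oD <= mA by rewrite le_max lexx.
have hTA : forall u, N (ip2 ip) u = 1 -> N (ip2 ip) (opmx2 X Y Y X u) <= mA ^+ 2.
  move=> [u1 u2]; rewrite !N2E /= => hu.
  have E : ip (X (u1 + u2) + Y (u1 + u2)) (X (u1 + u2) + Y (u1 + u2))
         + ip (X (u1 - u2) - Y (u1 - u2)) (X (u1 - u2) - Y (u1 - u2))
         = ip (X u1 + Y u2) (X u1 + Y u2) + ip (X u1 + Y u2) (X u1 + Y u2)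
         + ip (Y u1 + X u2) (Y u1 + X u2) + ip (Y u1 + X u2) (Y u1 + X u2).
    rewrite !XD !YD !XN !YN.
    do ![rewrite (ipDl lin) | rewrite (ipDr lin csym) | rewrite (ipNl lin) | rewrite (ipNr lin csym)].
    ring.
  have E2 : ip (u1 + u2) (u1 + u2) + ip (u1 - u2) (u1 - u2)
         = ip u1 u1 + ip u1 u1 + ip u2 u2 + ip u2 u2.
    do ![rewrite (ipDl lin) | rewrite (ipDr lin csym) | rewrite (ipNl lin) | rewrite (ipNr lin csym)].
    ring.
  have := congr1 (@complex.Re R) E; rewrite !(ipxx ge0) /= => hE.
  have := congr1 (@complex.Re R) E2; rewrite !(ipxx ge0) /= => hE2.
  have h1 := hoS (u1 + u2); have h2 := hoD (u1 - u2).
  have hS2 : oS ^+ 2 <= mA ^+ 2 by rewrite ler_pXn2r ?nnegrE.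
  have hD2 : oD ^+ 2 <= mA ^+ 2 by rewrite ler_pXn2r ?nnegrE.
  have g1 := N_ge0 ge0 (u1 + u2); have g2 := N_ge0 ge0 (u1 - u2).
  have h1' : oS ^+ 2 * N ip (u1 + u2) <= mA ^+ 2 * N ip (u1 + u2) by rewrite ler_wpM2r.
  have h2' : oD ^+ 2 * N ip (u1 - u2) <= mA ^+ 2 * N ip (u1 - u2) by rewrite ler_wpM2r.
  nra.
set mB := 2^-1 * (oS + oD).
have mB0 : 0 <= mB by rewrite mulr_ge0 ?invr_ge0 ?addr_ge0.
have hTB : forall u, N (ip2 ip) u = 1 ->
    N (ip2 ip) (opmx2 (fun _ => 0) X Y (fun _ => 0) u) <= mB ^+ 2.
  move=> [u1 u2]; rewrite !N2E /= add0r addr0 => hu.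
  have E1 : ip ((X u2 + Y u2) + (X u2 - Y u2)) ((X u2 + Y u2) + (X u2 - Y u2))
          = ip (X u2) (X u2) + ip (X u2) (X u2) + ip (X u2) (X u2) + ip (X u2) (X u2).
    do ![rewrite (ipDl lin) | rewrite (ipDr lin csym) | rewrite (ipNl lin) | rewrite (ipNr lin csym)].
    ring.
  have E2 : ip ((X u1 + Y u1) + - (X u1 - Y u1)) ((X u1 + Y u1) + - (X u1 - Y u1))
          = ip (Y u1) (Y u1) + ip (Y u1) (Y u1) + ip (Y u1) (Y u1) + ip (Y u1) (Y u1).
    do ![rewrite (ipDl lin) | rewrite (ipDr lin csym) | rewrite (ipNl lin) | rewrite (ipNr lin csym)].
    ring.
  have := congr1 (@complex.Re R) E1; rewrite !(ipxx ge0) /= => hE1.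
  have := congr1 (@complex.Re R) E2; rewrite !(ipxx ge0) /= => hE2.
  have t1 : N ip ((X u2 + Y u2) + (X u2 - Y u2)) <= (oS + oD) ^+ 2 * N ip u2.
    by apply: (tri lin csym ge0 def) => //; rewrite ?N_ge0.
  have t2 : N ip ((X u1 + Y u1) + - (X u1 - Y u1)) <= (oS + oD) ^+ 2 * N ip u1.
    by apply: (tri lin csym ge0 def) => //; rewrite ?N_ge0 ?(NN lin csym).
  have -> : mB ^+ 2 = (oS + oD) ^+ 2 / 4.
    by rewrite /mB; field.
  move: t1 t2; rewrite hE1 hE2 /N => t1 t2.
  have g1 := N_ge0 ge0 u1; have g2 := N_ge0 ge0 u2.
  rewrite /N in g1 g2 hu; nra.
set c := (Num.sqrt 2)^-1 : R.
have c0 : 0 < c by rewrite invr_gt0 sqrtr_gt0 ltr0n.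
have hc2 : c ^+ 2 = 2^-1 by rewrite exprVn sqr_sqrtr // ler0n.
set cc := (c%:C : R[i]).
have hc : cc * cc + cc * cc = 1.
  apply/eqP; rewrite eq_complex /=; apply/andP; split; apply/eqP; last by ring.
  transitivity (c ^+ 2 * 2); first by ring.
  by rewrite hc2 mulVf // pnatr_eq0.
have realCN : ((-c)%:C : R[i]) = - cc.
  by apply/eqP; rewrite eq_complex /= oppr0 !eqxx.
have normcc : Normc.normc cc = c.
  by rewrite /= expr0n addr0 sqrtr_sqr ger0_norm // ltW.
have normcN' : forall z : R[i], Normc.normc (- z) = Normc.normc z.
  by case=> a b /=; rewrite !sqrrN.
have fin : forall z w : R[i], z = (cc * cc + cc * cc) * w -> z = w.
  by move=> z w ->; rewrite hc mul1r.
have Nu : forall x, N ip x = 1 -> N (ip2 ip) (cc *: x, (-c)%:C *: x) = 1.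
  move=> x hx; rewrite N2E /= !(N_scale lin csym ge0) hx sqrrN hc2 !mulr1.
  by field.
have Nu' : forall x, N ip x = 1 -> N (ip2 ip) (cc *: x, cc *: x) = 1.
  move=> x hx; rewrite N2E /= !(N_scale lin csym ge0) hx hc2 !mulr1.
  by field.
pose ci := cc * 'i%C.
have conjci : conjc ci = - ci.
  by rewrite /ci /cc; apply/eqP; rewrite eq_complex /=; apply/andP; split; apply/eqP; ring.
have cici : ci * ci = - (cc * cc).
  by rewrite /ci /cc; apply/eqP; rewrite eq_complex /=; apply/andP; split; apply/eqP; ring.
have normcci : Normc.normc ci = c.
  by rewrite Normc.normcM normcc /= expr0n expr1n add0r sqrtr1 mulr1.
have Nui : forall x, N ip x = 1 -> N (ip2 ip) (cc *: x, ci *: x) = 1.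
  move=> x hx; rewrite N2E /= (N_scale lin csym ge0) (N_scaleC lin csym ge0) hx normcci hc2 !mulr1.
  by field.
have hcc : Normc.normc (cc * cc) = 2^-1 by rewrite Normc.normcM normcc -expr2.
split; split.
- rewrite ge_max; apply/andP; split.
  + rewrite -[wq ip q _]mul1r.
    apply: (wq_ge lin2 csym2 ge02 def2 ge0 ler01 mA0 hTA) => x y hx hy hxy.
    exists (cc *: x, (-c)%:C *: x), (cc *: y, (-c)%:C *: y); split.
    * exact: Nu.
    * exact: Nu.
    * apply: fin; rewrite /ip2 /= -hxy !(ipZl lin) !(ipZr lin csym) !conjc_real realCN.
      ring.
    * rewrite mul1r le_eqVlt; apply/orP; left; apply/eqP; congr Normc.normc.
      symmetry; apply: fin; rewrite /ip2 /opmx2 /= !XZ !YZ.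
      do ![rewrite (ipDl lin) | rewrite (ipDr lin csym) | rewrite (ipNl lin) | rewrite (ipNr lin csym) | rewrite (ipZl lin) | rewrite (ipZr lin csym)].
      rewrite !conjc_real realCN /cc; ring.
  + rewrite -[wq ip q _]mul1r.
    apply: (wq_ge lin2 csym2 ge02 def2 ge0 ler01 mA0 hTA) => x y hx hy hxy.
    exists (cc *: x, cc *: x), (cc *: y, cc *: y); split.
    * exact: Nu'.
    * exact: Nu'.
    * apply: fin; rewrite /ip2 /= -hxy !(ipZl lin) !(ipZr lin csym) !conjc_real.
      ring.
    * rewrite mul1r le_eqVlt; apply/orP; left; apply/eqP; congr Normc.normc.
      symmetry; apply: fin; rewrite /ip2 /opmx2 /= !XZ !YZ.
      do ![rewrite (ipDl lin) | rewrite (ipDr lin csym) | rewrite (ipNl lin) | rewrite (ipNr lin csym) | rewrite (ipZl lin) | rewrite (ipZr lin csym)].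
      rewrite !conjc_real /cc; ring.
- exact: (wq_le lin2 csym2 ge02 def2 q mA0 hTA).
- rewrite maxr_pMr ?invr_ge0 ?ler0n // ge_max; apply/andP; split.
  + apply: (wq_ge lin2 csym2 ge02 def2 ge0 _ mB0 hTB) => [|x y hx hy hxy].
      by rewrite invr_ge0 ler0n.
    exists (cc *: x, cc *: x), (cc *: y, cc *: y); split.
    * exact: Nu'.
    * exact: Nu'.
    * apply: fin; rewrite /ip2 /= -hxy !(ipZl lin) !(ipZr lin csym) !conjc_real.
      ring.
    * rewrite le_eqVlt; apply/orP; left; apply/eqP.
      have -> : ip2 ip (opmx2 (fun _ => 0) X Y (fun _ => 0) (cc *: x, cc *: x)) (cc *: y, cc *: y)
          = cc * cc * ip (X x + Y x) y.
        rewrite /ip2 /opmx2 /= add0r addr0 !XZ !YZ.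
        do ![rewrite (ipDl lin) | rewrite (ipDr lin csym) | rewrite (ipNl lin) | rewrite (ipNr lin csym) | rewrite (ipZl lin) | rewrite (ipZr lin csym)].
        rewrite !conjc_real /cc; ring.
      by rewrite Normc.normcM hcc.
  + apply: (wq_ge lin2 csym2 ge02 def2 ge0 _ mB0 hTB) => [|x y hx hy hxy].
      by rewrite invr_ge0 ler0n.
    exists (cc *: x, ci *: x), (cc *: y, ci *: y); split.
    * exact: Nui.
    * exact: Nui.
    * rewrite /ip2 /= -hxy !(ipZl lin) !(ipZr lin csym) conjci conjc_real -/cc.
      transitivity ((cc * cc - ci * ci) * ip x y); first by ring.
      by rewrite cici opprK hc mul1r.
    * rewrite le_eqVlt; apply/orP; left; apply/eqP.
      have -> : ip2 ip (opmx2 (fun _ => 0) X Y (fun _ => 0) (cc *: x, ci *: x)) (cc *: y, ci *: y)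
          = cc * ci * ip (X x - Y x) y.
        rewrite /ip2 /opmx2 /= add0r addr0 !XZ !YZ.
        do ![rewrite (ipDl lin) | rewrite (ipDr lin csym) | rewrite (ipNl lin) | rewrite (ipNr lin csym) | rewrite (ipZl lin) | rewrite (ipZr lin csym)].
        rewrite conjci conjc_real -/cc; ring.
      by rewrite !Normc.normcM normcc /= expr0n expr1n add0r sqrtr1 mulr1 -expr2 hc2.
- exact: (wq_le lin2 csym2 ge02 def2 q mB0 hTB).

Qed.
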